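(* Let $\ell,k$ be integers with $k>2$ and $\ell>6$, and let $t>0$ be real with $T=\lfloor tk\rfloor$. Let $B_{\ell,k}$ be the graph constructed as follows: for each $1\le r\le k$ take disjoint paths $x_{0,r}x_{1,r}\cdots x_{\ell+1,r}$ and $y_{0,r}y_{1,r}y_{2,r}y_{3,r}y_{4,r}y_{5,r}$; identify all $x_{0,r},y_{0,r}$ ($1\le r\le k$) into a single vertex $u$; identify all $x_{\ell+1,r},y_{5,r}$ into a single vertex $v$; identify $y_{2,1},\dots,y_{2,k}$ into a single vertex $y_{2,*}$ and $y_{3,1},\dots,y_{3,k}$ into a single vertex $y_{3,*}$ (so the $k$ edges $y_{2,r}y_{3,r}$ become the single edge $y_{2,*}y_{3,*}$). Let $H_{\ell,k,t}$ be obtained from $B_{\ell,k}$ by adding $T$ pendant vertices $u_1,\dots,u_T$ adjacent to $u$ and $T$ pendant vertices $v_1,\dots,v_T$ adjacent to $v$. Then the orbits on the vertex set of $H_{\ell,k,t}$ of the group of graph automorphisms fixing $u$ are $\{u_r\}_{r}$, $\{u\}$, $\{x_{1,r}\}_r,\dots,\{x_{\ell,r}\}_r$, $\{y_{1,r}\}_r$, $\{y_{2,*}\}$, $\{y_{3,*}\}$, $\{y_{4,r}\}_r$, $\{v\}$, $\{v_r\}_r$.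
   Context: A graph automorphism is a bijection of the vertex set preserving adjacency and non-adjacency. *)

(* Defs.v *)
From HB Require Import structures.
From mathcomp Require Import all_boot all_order all_fingroup.

Set Implicit Arguments.
Unset Strict Implicit.
Unset Printing Implicit Defensive.

(* Indices are 0-based:
     Hu, Hv          : u, v
     Hpu i, Hpv i    : u_{i+1}, v_{i+1}       (i : 'I_T)
     Hx i r          : x_{i+1, r+1}           (i : 'I_l, r : 'I_k), 1 <= i+1 <= l
     Hy1 r, Hy4 r    : y_{1,r+1}, y_{4,r+1}
     Hy2, Hy3        : y_{2,*}, y_{3,*}
   (x_{0,r} = y_{0,r} = u and x_{l+1,r} = y_{5,r} = v after identification.) *)
Inductive hvert (l k T : nat) : Type :=
| Hu | Hv | Hy2 | Hy3
| Hpu of 'I_T | Hpv of 'I_T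
| Hx of 'I_l & 'I_k
| Hy1 of 'I_k | Hy4 of 'I_k.

Arguments Hu {l k T}. Arguments Hv {l k T}.
Arguments Hy2 {l k T}. Arguments Hy3 {l k T}.
Arguments Hpu {l k T}. Arguments Hpv {l k T}.
Arguments Hx {l k T}. Arguments Hy1 {l k T}. Arguments Hy4 {l k T}.

Section HVertFin.
Variables l k T : nat.

Definition hvert_code :=
  (((('I_4 + 'I_T) + 'I_T) + ('I_l * 'I_k)) + ('I_k + 'I_k))%type.

Definition hvert_enc (w : hvert l k T) : hvert_code :=
  match w with
  | Hu => inl (inl (inl (inl (@Ordinal 4 0 isT))))
  | Hv => inl (inl (inl (inl (@Ordinal 4 1 isT))))
  | Hy2 => inl (inl (inl (inl (@Ordinal 4 2 isT))))
  | Hy3 => inl (inl (inl (inl (@Ordinal 4 3 isT))))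
  | Hpu i => inl (inl (inl (inr i)))
  | Hpv i => inl (inl (inr i))
  | Hx i r => inl (inr (i, r))
  | Hy1 r => inr (inl r)
  | Hy4 r => inr (inr r)
  end.

Definition hvert_dec (c : hvert_code) : hvert l k T :=
  match c with
  | inl (inl (inl (inl j))) =>
      match val j with 0 => Hu | 1 => Hv | 2 => Hy2 | _ => Hy3 end
  | inl (inl (inl (inr i))) => Hpu i
  | inl (inl (inr i)) => Hpv i
  | inl (inr (i, r)) => Hx i r
  | inr (inl r) => Hy1 r
  | inr (inr r) => Hy4 r
  end.

Lemma hvert_encK : cancel hvert_enc hvert_dec.
Proof. by case. Qed.

End HVertFin.

HB.instance Definition _ l k T :=
  Countable.copy (hvert l k T) (can_type (@hvert_encK l k T)).
HB.instance Definition _ l k T : isFinite (hvert l k T) := CanIsFinite (@hvert_encK l k T).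

Definition hadj0 (l k T : nat) (a b : hvert l k T) : bool :=
  match a, b with
  | Hu, Hpu _ => true
  | Hv, Hpv _ => true
  | Hu, Hx i _ => val i == 0
  | Hx i r, Hx j s => (r == s) && (val j == (val i).+1)
  | Hx i _, Hv => val i == l.-1
  | Hu, Hy1 _ => true
  | Hy1 _, Hy2 => true
  | Hy2, Hy3 => true
  | Hy3, Hy4 _ => true
  | Hy4 _, Hv => true
  | _, _ => false
  end.

Definition hadj (l k T : nat) : rel (hvert l k T) :=
  fun a b => hadj0 a b || hadj0 b a.

Definition is_graph_aut (V : finType) (e : rel V) (s : {perm V}) : bool :=
  [forall a, forall b, e (s a) (s b) == e a b].

Definition aut_orbit_fixing (V : finType) (e : rel V) (u w : V) : {set V} :=
  [set w' | [exists s : {perm V}, [&& is_graph_aut e s, s u == u & s w == w']]].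

Definition claimed_orbit (l k T : nat) (w : hvert l k T) : {set hvert l k T} :=
  match w with
  | Hpu _ => [set Hpu i | i : 'I_T]
  | Hu => [set Hu]
  | Hx i _ => [set Hx i r | r : 'I_k]
  | Hy1 _ => [set Hy1 r | r : 'I_k]
  | Hy2 => [set Hy2]
  | Hy3 => [set Hy3]
  | Hy4 _ => [set Hy4 r | r : 'I_k]
  | Hv => [set Hv]
  | Hpv _ => [set Hpv i | i : 'I_T]
  end.

(* Main.v *)
Require Import Defs.
From HB Require Import structures.
From mathcomp Require Import all_boot all_order all_algebra all_fingroup.
From mathcomp Require Import reals.
From mathcomp Require Import zify.
Import Order.TTheory GRing.Theory Num.Theory.
Set Implicit Arguments. Unset Strict Implicit.

Section S.
Variables (l k T : nat).
Hypothesis hk : (2 < k)%N.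
Hypothesis hl : (6 < l)%N.
Local Notation V := (hvert l k T).
Local Notation e := (@hadj l k T).
Definition cls (w : V) : nat := match w with Hu => 0 | Hv => 1 | Hy2 => 2 | Hy3 => 3
 | Hpu _ => 4 | Hpv _ => 5 | Hy1 _ => 6 | Hy4 _ => 7 | Hx i _ => (val i).+4.+4 end.
Ltac crush := repeat match goal with H : is_true (hadj _ _) |- _ => move: H end; rewrite /hadj /=; try lia.
Lemma nbr_u b : e Hu b -> [|| cls b == 4, cls b == 6 | cls b == 8].
Proof. case: b => //= *; crush. Qed.
Lemma nbr_x i r b : e (Hx i r) b -> [|| b == Hu, b == Hv, cls b == (val i).+1.+4.+4 | (cls b).+1 == (val i).+4.+4].
Proof. case: b => //= *; crush. Qed.
Lemma nbr_v b : e Hv b -> [|| cls b == 5, cls b == 7 | cls b == (l.-1).+4.+4].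
Proof. case: b => //= *; crush. Qed.
Lemma nbr_y2 b : e Hy2 b -> (cls b == 3) || (cls b == 6).
Proof. by case: b. Qed.
Lemma nbr_y3 b : e Hy3 b -> (cls b == 2) || (cls b == 7).
Proof. by case: b. Qed.
Lemma nbr_pu i b : e (Hpu i) b -> b = Hu.
Proof. by case: b. Qed.
Lemma nbr_pv i b : e (Hpv i) b -> b = Hv.
Proof. by case: b. Qed.
Lemma L1 b1 b2 c : e Hu b1 -> e Hu b2 -> b1 <> b2 -> e b1 c -> e b2 c -> c <> Hu -> c = Hy2.
Proof.
move=> h1 h2 h12 h1c h2c hc.
case: b1 h1 h12 h1c => // [i|i r|r]; case: c hc h2c => //=; crush.
case: b2 => //= j s; rewrite orbF => /eqP j0 o o0 _ /orP[]/andP[/eqP rs /eqP jo] /orP[]// /eqP i0 hn; try lia.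
move=> /orP[/andP[/eqP rs' /eqP io]|/andP[_ /eqP]]; last lia.
exfalso; apply: hn.
rewrite rs' -rs; congr Hx; apply: val_inj => /=; lia.
Qed.

Lemma L2 b1 b2 c : e Hy3 b1 -> e Hy3 b2 -> b1 <> b2 -> e b1 c -> e b2 c -> c <> Hy3 -> c = Hv.
Proof.
move=> h1 h2 h12 h1c h2c hc.
case: b1 h1 h12 h1c => // [|r]; case: c hc h2c => //=; case: b2 h2 => //.
Qed.

Lemma cls0 b : cls b = 0 -> b = Hu. Proof. by case: b. Qed.
Lemma cls1 b : cls b = 1 -> b = Hv. Proof. by case: b. Qed.
Lemma cls2 b : cls b = 2 -> b = Hy2. Proof. by case: b. Qed.
Lemma cls3 b : cls b = 3 -> b = Hy3. Proof. by case: b. Qed.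
Lemma cls4 b : cls b = 4 -> exists i, b = Hpu i. Proof. by case: b => // i; exists i. Qed.
Lemma cls5 b : cls b = 5 -> exists i, b = Hpv i. Proof. by case: b => // i; exists i. Qed.
Lemma cls6 b : cls b = 6 -> exists i, b = Hy1 i. Proof. by case: b => // i; exists i. Qed.
Lemma cls7 b : cls b = 7 -> exists i, b = Hy4 i. Proof. by case: b => // i; exists i. Qed.
Lemma clsX n b : cls b = n.+4.+4 -> exists i r, b = Hx i r /\ val i = n.
Proof. by case: b => // i r [<-]; exists i, r. Qed.

Definition G (s : {perm V}) := is_graph_aut e s /\ s Hu = Hu.

Lemma autE s : is_graph_aut e s -> forall a b, e (s a) (s b) = e a b.
Proof. move=> /forallP H a b; exact/eqP/(forallP (H a) b). Qed.

Lemma GE s : G s -> forall a b, e (s a) (s b) = e a b.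
Proof. by case=> /autE. Qed.

Lemma GV s : G s -> G s^-1.
Proof.
move=> [H1 H2]; split; last by rewrite -{1}H2 permK.
apply/forallP=> a; apply/forallP=> b; apply/eqP.
by rewrite -(autE H1) !permKV.
Qed.

Lemma back c : (forall s, G s -> forall w, cls w = c -> cls (s w) = c) ->
  forall s, G s -> forall w, cls (s w) = c -> cls w = c.
Proof. move=> H s Gs w /(H _ (GV Gs)); by rewrite permK. Qed.

Lemma sinj (s : {perm V}) a b : s a = s b -> a = b.
Proof. exact: perm_inj. Qed.

Let r0 : 'I_k := @Ordinal k 0 (ltnW (ltnW hk)).
Let r1 : 'I_k := @Ordinal k 1 (ltnW hk).

Lemma Gy2 s : G s -> s Hy2 = Hy2.
Proof.
move=> Gs; have su := Gs.2.
apply: (@L1 (s (Hy1 r0)) (s (Hy1 r1))).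
- by rewrite -{1}su GE.
- by rewrite -{1}su GE.
- by move/sinj.
- by rewrite GE.
- by rewrite GE.
- by rewrite -su => /sinj.
Qed.

Lemma Gy3 s : G s -> s Hy3 = Hy3.
Proof.
move=> Gs; have su := Gs.2.
have : e Hy2 (s Hy3) by rewrite -(Gy2 Gs) GE.
case/nbr_y2/orP => /eqP; first exact: cls3.
move/cls6 => [i hi].
have : e Hu (s Hy3) by rewrite hi.
by rewrite -{1}su GE.
Qed.

Lemma Gv s : G s -> s Hv = Hv.
Proof.
move=> Gs; have su := Gs.2; have s3 := Gy3 Gs.
apply: (@L2 (s (Hy4 r0)) (s (Hy4 r1))).
- by rewrite -{1}s3 GE.
- by rewrite -{1}s3 GE.
- by move/sinj.
- by rewrite GE.
- by rewrite GE.
- by rewrite -s3 => /sinj.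
Qed.

Lemma Gc6 s : G s -> forall w, cls w = 6 -> cls (s w) = 6.
Proof.
move=> Gs w /cls6 [r ->].
have : e Hy2 (s (Hy1 r)) by rewrite -(Gy2 Gs) GE.
case/nbr_y2/orP => /eqP // /cls3; by rewrite -(Gy3 Gs) => /sinj.
Qed.

Lemma Gc7 s : G s -> forall w, cls w = 7 -> cls (s w) = 7.
Proof.
move=> Gs w /cls7 [r ->].
have : e Hy3 (s (Hy4 r)) by rewrite -(Gy3 Gs) GE.
case/nbr_y3/orP => /eqP // /cls2; by rewrite -(Gy2 Gs) => /sinj.
Qed.

Lemma GcX n : forall s, G s -> forall w, cls w = n.+4.+4 -> cls (s w) = n.+4.+4.
Proof.
elim/ltn_ind: n => n IH s Gs w /clsX [i [r [-> hi]]].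
have su := Gs.2.
case: n IH hi => [|m] IH hi.
- have h1 : (1 < l)%N by lia.
  have : e (Hx i r) (Hx (Ordinal h1) r) by rewrite /hadj /= eqxx hi.
  rewrite -(GE Gs).
  have : e Hu (s (Hx i r)) by rewrite -{1}su (GE Gs) /hadj /= hi.
  case/nbr_u/or3P => /eqP.
  + move/cls4 => [j ->] /nbr_pu; rewrite -su => /sinj //.
  + by move/(back (@Gc6) Gs).
  + by [].
- have hi' : nat_of_ord i = m.+1 := hi.
  have hm : (m < l)%N by move: (ltn_ord i); lia.
  have /(IH m (ltnSn m) _ Gs) : cls (Hx (Ordinal hm) r) = m.+4.+4 by [].
  move/clsX => [j [r' [hj jm]]].
  have : e (s (Hx (Ordinal hm) r)) (s (Hx i r)) by rewrite (GE Gs) /hadj /= eqxx hi eqxx.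
  rewrite hj => /nbr_x /or4P [] /eqP.
  + by rewrite -su => /sinj.
  + by rewrite -(Gv Gs) => /sinj.
  + by rewrite jm.
  + rewrite jm; case: m IH {hm hj jm hi'} hi => [|p] IH hi //.
    + by move=> [] /(back (@Gc7) Gs) /=; rewrite hi.
    + move=> [] h; have := back (IH p (leqW (ltnSn _))) Gs h.
      by rewrite /= hi; lia.
Qed.

Lemma Gc4 s : G s -> forall w, cls w = 4 -> cls (s w) = 4.
Proof.
move=> Gs w /cls4 [i ->]; have su := Gs.2.
have : e Hu (s (Hpu i)) by rewrite -{1}su (GE Gs).
case/nbr_u/or3P => /eqP // h.
- by have := back (@Gc6) Gs h.
- by have := back (@GcX 0) Gs h.
Qed.

Lemma Gc5 s : G s -> forall w, cls w = 5 -> cls (s w) = 5.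
Proof.
move=> Gs w /cls5 [i ->]; have sv := Gv Gs.
have : e Hv (s (Hpv i)) by rewrite -{1}sv (GE Gs).
case/nbr_v/or3P => /eqP // h.
- by have := back (@Gc7) Gs h.
- by have := back (@GcX l.-1) Gs h.
Qed.

Lemma Gall s : G s -> forall w, cls (s w) = cls w.
Proof.
move=> Gs; case.
- by rewrite Gs.2.
- by rewrite (Gv Gs).
- by rewrite (Gy2 Gs).
- by rewrite (Gy3 Gs).
- by move=> i; apply: Gc4.
- by move=> i; apply: Gc5.
- by move=> i r; apply: GcX.
- by move=> i; apply: Gc6.
- by move=> i; apply: Gc7.
Qed.

Definition relab (f g : {perm 'I_T}) (h : {perm 'I_k}) (w : V) : V :=
  match w with
  | Hpu i => Hpu (f i) | Hpv i => Hpv (g i) | Hx i r => Hx i (h r)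
  | Hy1 r => Hy1 (h r) | Hy4 r => Hy4 (h r) | w => w end.

Lemma relab_inj f g h : injective (relab f g h).
Proof.
case=> [||||i|i|i r|r|r]; case=> [||||j|j|j r'|r'|r'] //= [];
  try (by move/perm_inj=> ->); try (by move=> -> /perm_inj ->).
Qed.

Lemma relab_adj f g h a b : e (relab f g h a) (relab f g h b) = e a b.
Proof.
rewrite /hadj; case: a => [||||i|i|i r|r|r]; case: b => [||||j|j|j r'|r'|r'] //=;
  by rewrite ?(inj_eq perm_inj).
Qed.

Lemma relab_G f g h : G (perm (@relab_inj f g h)).
Proof.
split; last by rewrite permE.
apply/forallP=> a; apply/forallP=> b; by rewrite !permE relab_adj.
Qed.

Lemma claimedE (w : V) : claimed_orbit w = [set w' | cls w' == cls w].
Proof.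
apply/setP=> w'; rewrite inE.
case: w => [||||i|i|i r|r|r] /=; rewrite ?inE;
  (apply/idP/eqP; [by (move=> /imsetP[? _ ->] || move=> /eqP ->) |]);
  case: w' => //=; try (by move=> j _; apply/imsetP; exists j).
move=> j r' [] ji; apply/imsetP; exists r' => //; congr Hx; exact: val_inj.
Qed.

Lemma exists_relab (w w' : V) : cls w' = cls w -> exists f g h, relab f g h w = w'.
Proof.
case: w => [||||i|i|i r|r|r]; case: w' => [||||j|j|j r'|r'|r'] //= hc;
  try (by exists 1%g, 1%g, 1%g).
- by exists (tperm i j), 1%g, 1%g; rewrite /= tpermL.
- by exists 1%g, (tperm i j), 1%g; rewrite /= tpermL.
- exists 1%g, 1%g, (tperm r r'); rewrite /= tpermL; congr Hx; apply: val_inj; by case: hc.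
- by exists 1%g, 1%g, (tperm r r'); rewrite /= tpermL.
- by exists 1%g, 1%g, (tperm r r'); rewrite /= tpermL.
Qed.

Lemma orbit_main w : aut_orbit_fixing e Hu w = claimed_orbit w.
Proof.
rewrite claimedE; apply/setP => w'; rewrite !inE; apply/existsP/eqP.
- by case=> s /and3P[ga /eqP su /eqP <-]; exact: (Gall (conj ga su) w).
- move=> /exists_relab [f [g [h hw]]]; exists (perm (@relab_inj f g h)).
  have [ga su] := relab_G f g h.
  by rewrite ga su eqxx permE hw eqxx.
Qed.
End S.

Local Open Scope ring_scope.

Theorem proposition18 (R : realType) (l k : nat) (t : R) (T : nat) :
  (2 < k)%N -> (6 < l)%N -> 0 < t ->
  (T%:Z = Num.floor (t * k%:R))%R ->
  forall w : hvert l k T,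
    aut_orbit_fixing (@hadj l k T) Hu w = claimed_orbit w.
Proof.
move=> hk hl _ _ w; exact: orbit_main.
Qed.
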